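(* Let $p\geq 2$ be an integer (not necessarily prime) and $r\in\{1,\ldots,p-1\}$. Define integers $D_{p,r}(n)$ by $$\prod_{i=0}^{\infty}\big(1-x^{p^{i}}\big)^{r}=\sum_{n=0}^{\infty}D_{p,r}(n)x^{n}.$$ Then for every $n\in\mathbb{N}$, $$D_{p,r}(n)=\prod_{i=0}^{p-1}(-1)^{iN_{p}(i,n)}\binom{r}{i}^{N_{p}(i,n)},$$ with the conventions $\binom{a}{b}=0$ for $b>a$ and $0^{0}=1$. Moreover, for every $j\in\{0,\ldots,p-1\}$ and every positive integer $n$, $$D_{p,r}(pn+j)=(-1)^{j}\binom{r}{j}D_{p,r}(n).$$
   Context: For integers $p\geq 2$, $n\geq 0$ and $i\in\{0,\ldots,p-1\}$, $N_p(i,n)$ denotes the number of digits equal to $i$ in the (unique) base-$p$ expansion $n=\sum_{j}\varepsilon_j p^j$, $\varepsilon_j\in\{0,\ldots,p-1\}$ (with $N_p(i,0)=0$). *)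

(* Defs.v *)
From mathcomp Require Import all_boot all_order all_algebra.
Set Implicit Arguments. Unset Strict Implicit. Unset Printing Implicit Defensive.
Import GRing.Theory Num.Theory.
Local Open Scope ring_scope.

(* The digits of n >= 1 are eps_j = (n %/ p^j) %% p for the positions j with
   p^j <= n (all such j are < n when p >= 2); N_p(i,0) = 0. *)
Definition Ndig (p i n : nat) : nat :=
  count (fun j => (p ^ j <= n)%N && ((n %/ p ^ j) %% p == i)%N) (iota 0 n).

(* D_{p,r}(n): coefficient of x^n in prod_{i>=0} (1 - x^{p^i})^r.  For p >= 2,
   the factors with i > n are 1 mod x^{n+1}, so the coefficient of x^n equals
   that of the finite product over i <= n. *)
Definition D (p r n : nat) : int :=
  (\prod_(i < n.+1) (1 - 'X^(p ^ i)) ^+ r : {poly int})`_n.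

(* Main.v *)
Require Import Defs.
From mathcomp Require Import all_boot all_order all_algebra.
From mathcomp Require Import zify ring.
Import GRing.Theory Num.Theory.
Local Open Scope ring_scope.
Definition Nd (p i L n : nat) : nat :=
  count (fun j => (p ^ j <= n)%N && ((n %/ p ^ j) %% p == i)%N) (iota 0 L).

Lemma Nd_stable p i L1 L2 n : (0 < p)%N -> (n < p ^ L1)%N -> (L1 <= L2)%N ->
  Nd p i L1 n = Nd p i L2 n.
Proof.
move=> p0 hn hL; rewrite /Nd -(subnKC hL) iotaD count_cat add0n.
set c := count _ (iota L1 _).
suff -> : c = 0%N by rewrite addn0.
rewrite /c (eq_in_count (a2 := pred0)) ?count_pred0 // => k.
rewrite mem_iota => /andP[hk _] /=.
have : (p ^ L1 <= p ^ k)%N by exact: leq_pexp2l.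
move=> h; apply/negbTE; rewrite negb_and; apply/orP; left.
rewrite -ltnNge; exact: leq_trans hn h.
Qed.

Lemma Nd_S p i L n : (0 < p)%N -> (0 < n)%N ->
  Nd p i L.+1 n = ((n %% p == i) + Nd p i L (n %/ p))%N.
Proof.
move=> p0 n0; rewrite /Nd /= expn0 divn1 n0 /=; congr (_ + _)%N.
rewrite -[1%N]/(1 + 0)%N iotaDl count_map; apply: eq_count => k /=.
rewrite add1n expnS divnMA leq_divRL ?expn_gt0 ?p0 // mulnC.
by [].
Qed.

Lemma Ndig_S p i n : (1 < p)%N -> (0 < n)%N ->
  Ndig p i n = ((n %% p == i) + Ndig p i (n %/ p))%N.
Proof.
move=> p1 n0; have p0 : (0 < p)%N by lia.
have -> : Ndig p i n = Nd p i n n by [].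
rewrite (@Nd_stable p i n n.+1 n p0 (ltn_expl _ p1)) // Nd_S //.
congr (_ + _)%N.
have -> : Ndig p i (n %/ p) = Nd p i (n %/ p) (n %/ p) by [].
apply: esym; apply: Nd_stable => //; first exact: ltn_expl.
exact: leq_div.
Qed.

Definition fd (p r n : nat) : int :=
  \prod_(i < p) ((-1) ^+ (i * Ndig p i n) * ('C(r, i)%:Z) ^+ (Ndig p i n)).

Lemma fd0 p r : fd p r 0 = 1.
Proof. by rewrite /fd big1 // => i _; rewrite /Ndig /= muln0 !expr0 mulr1. Qed.

Lemma fd_rec p r m j : (1 < p)%N -> (j < p)%N ->
  fd p r (p * m + j) = (-1) ^+ j * ('C(r, j)%:Z) * fd p r m.
Proof.
move=> p1 jp; have p0 : (0 < p)%N by lia.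
have [/andP[/eqP m0 /eqP j0]|h] := boolP ((m == 0) && (j == 0))%N.
  by rewrite m0 j0 muln0 addn0 expr0 bin0 !mul1r.
have n0 : (0 < p * m + j)%N.
  move: h; rewrite negb_and => /orP[]; rewrite -lt0n => h'; nia.
have Hn : forall i, Ndig p i (p * m + j) = ((j == i) + Ndig p i m)%N.
  move=> i; rewrite Ndig_S // mulnC modnMDl modn_small // divnMDl // divn_small //.
  by rewrite addn0.
rewrite /fd.
under eq_bigr => i _ do rewrite Hn mulnDr !exprD mulrACA.
rewrite big_split /=; congr (_ * _).
rewrite (bigD1 (Ordinal jp)) //= eqxx muln1 expr1 big1 ?mulr1 // => i hi.
have -> : (j == i) = false.
  by apply/negbTE; apply: contra hi => /eqP e; apply/eqP; apply: val_inj.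
by rewrite muln0 !expr0 mulr1.
Qed.
Definition PP (p r N : nat) : {poly int} := \prod_(i < N) (1 - 'X^(p ^ i)) ^+ r.

Lemma PP_S p r N : PP p r N.+1 = (1 - 'X) ^+ r * (PP p r N \Po 'X^p).
Proof.
rewrite /PP big_ord_recl expn0 expr1; congr (_ * _).
rewrite rmorph_prod; apply: eq_bigr => i _ /=.
by rewrite rmorphXn rmorphB /= rmorph1 comp_Xn_poly -exprM expnS.
Qed.

Lemma coef_1mX r j : ((1 - 'X) ^+ r : {poly int})`_j = (-1) ^+ j * ('C(r, j)%:Z).
Proof.
rewrite exprBn coef_sum.
under eq_bigr => i _ do rewrite expr1n mulr1 coefMn -polyCN -rmorphXn coefCM coefXn.
have [jr|jr] := ltnP j r.+1.
  rewrite (bigD1 (Ordinal jr)) //= eqxx mulr1.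
  rewrite big1 ?addr0; first by rewrite -mulr_natr natz.
  move=> i hi; have -> : (j == i) = false.
    by apply/negbTE; apply: contra hi => /eqP e; apply/eqP; apply: val_inj.
  by rewrite mulr0 mul0rn.
rewrite bin_small // mulr0 big1 // => i _.
have -> : (j == i) = false by apply/negbTE; have := ltn_ord i; lia.
by rewrite mulr0 mul0rn.
Qed.

Lemma PP_coef p r N n : (1 < p)%N -> (r <= p - 1)%N -> (n < p ^ N)%N ->
  (PP p r N)`_n = fd p r n.
Proof.
move=> p1 rp; have p0 : (0 < p)%N by lia.
elim: N n => [|N IH] n hn.
  have -> : n = 0%N by move: hn; rewrite expn0; lia.
  by rewrite /PP big_ord0 coef1 fd0.
set m := (n %/ p)%N; set j := (n %% p)%N.
have hnd : n = (p * m + j)%N by rewrite /m /j mulnC -divn_eq.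
have jp : (j < p)%N by rewrite /j ltn_mod.
have hm : (m < p ^ N)%N by rewrite /m ltn_divLR // -expnSr.
have jn : (j < n.+1)%N by rewrite ltnS /j leq_mod.
rewrite PP_S coefM (bigD1 (Ordinal jn)) //= big1 ?addr0.
  rewrite coef_comp_poly_Xn // coef_1mX.
  have -> : (n - j = m * p)%N by lia.
  rewrite dvdn_mull // mulnK // IH // [in RHS]hnd fd_rec //.
move=> k hk; rewrite coef_comp_poly_Xn // coef_1mX.
have kn : (k <= n)%N by have := ltn_ord k; lia.
have [kp|kp] := ltnP k p.
  case: ifP => [hd|_]; last by rewrite mulr0.
  exfalso; move: hd; rewrite -eqn_mod_dvd // => /eqP e.
  move: hk => /eqP; apply; apply: val_inj => /=.
  by rewrite /j e modn_small.
by rewrite bin_small ?mulr0 ?mul0r //; lia.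
Qed.

Theorem lemma2p1 (p r : nat) (hp : (2 <= p)%N) (hr1 : (1 <= r)%N) (hrp : (r <= p - 1)%N) :
  (forall n : nat,
     D p r n = \prod_(i < p) ((-1) ^+ (i * Ndig p i n) * ('C(r, i)%:Z) ^+ (Ndig p i n)))
  /\
  (forall j n : nat, (j <= p - 1)%N -> (0 < n)%N ->
     D p r (p * n + j) = (-1) ^+ j * ('C(r, j)%:Z) * D p r n).
Proof.
have HD : forall n, D p r n = fd p r n.
  move=> n; have -> : D p r n = (PP p r n.+1)`_n by [].
  apply: PP_coef => //; apply: (ltn_trans (ltn_expl n hp)).
  by rewrite ltn_exp2l.
split; first exact: HD.
move=> j n hj hn; rewrite !HD fd_rec //; lia.
Qed.
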